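(* Let $G$ be a diamond-free graph and $S$ a degree-greedy stable set in $G$. Then $G$ is edge simplicial if and only if the multigraph $G_S$ equals $G-S$ (same vertex set and same multiset of edges; in particular $G_S$ has no repeated edges).
   Context: A vertex $v$ is simplicial if $N[v]$ is a clique; a clique is simplicial if it equals $N[v]$ for a simplicial vertex $v$. $G$ is edge simplicial if every edge is contained in a simplicial clique. For a linear order $\sigma=(v_1,\dots,v_n)$ of $V(G)$, the $\sigma$-greedy stable set is obtained by scanning $v_1,\dots,v_n$ in order, starting with $S=\emptyset$, and adding $v_i$ to $S$ whenever $S\cup\{v_i\}$ is stable; a degree-greedy stable set is a $\sigma$-greedy stable set for an order with $d_G(v_i)\le d_G(v_j)$ for $i<j$. For a stable set $S$, $G_S$ is the multigraph with vertex set $V(G)\setminus S$ and edge multiset $\biguplus_{v\in S}\{xy: x\ne y,\ x,y\in N_G(v)\}$ (multiset union, one copy per $v$). The diamond is $K_4$ minus one edge; diamond-free means no induced diamond. *)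

(* Defs.v *)
(* A finite simple graph is a symmetric irreflexive rel e on a finType T. *)
From mathcomp Require Import all_boot.
Set Implicit Arguments. Unset Strict Implicit. Unset Printing Implicit Defensive.

Section Graphs.
Variables (T : finType) (e : rel T).

Definition nbh (v : T) : {set T} := [set u | e v u].
Definition cnbh (v : T) : {set T} := v |: nbh v.
Definition deg (v : T) : nat := #|nbh v|.

Definition is_clique (A : {set T}) : bool :=
  [forall x in A, forall y in A, (x != y) ==> e x y].
Definition is_stable (A : {set T}) : bool :=
  [forall x in A, forall y in A, ~~ e x y].

Definition simplicial_vertex (v : T) : bool := is_clique (cnbh v).
Definition simplicial_clique (K : {set T}) : Prop :=
  exists v, simplicial_vertex v /\ K = cnbh v.
Definition edge_simplicial : Prop :=
  forall x y, e x y -> exists K, simplicial_clique K /\ x \in K /\ y \in K.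

(* induced diamond: K4 minus the edge cd *)
Definition diamond_free : Prop :=
  ~ exists a b c d : T,
      [/\ c != d, e a b, e a c, e a d & [/\ e b c, e b d & ~~ e c d]].

Definition greedy_stable (sigma : seq T) : {set T} :=
  foldl (fun S v => if is_stable (v |: S) then v |: S else S) set0 sigma.

Definition degree_greedy (S : {set T}) : Prop :=
  exists sigma : seq T,
    [/\ perm_eq sigma (enum T),
        pairwise (fun a b => deg a <= deg b) sigma &
        S = greedy_stable sigma].

(* Multigraph G_S: vertex set V \ S; multiplicity of the (unordered) pair {x,y},
   x != y, is the number of v in S with x, y in N(v).
   G - S: vertex set V \ S, multiplicity of {x,y} is 1 if xy is an edge, else 0.
   Both have vertex set V \ S, so equality means equal multiplicities on all
   pairs of distinct vertices of V \ S. *)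
Definition GS_mult (S : {set T}) (x y : T) : nat :=
  #|[set v in S | (x \in nbh v) && (y \in nbh v)]|.
Definition GminusS_mult (x y : T) : nat := e x y.

Definition GS_eq_GminusS (S : {set T}) : Prop :=
  forall x y, x \notin S -> y \notin S -> x != y ->
    GS_mult S x y = GminusS_mult x y.

End Graphs.

(* Main.v *)
Require Import Defs.
From mathcomp Require Import all_boot.
Set Implicit Arguments. Unset Strict Implicit. Unset Printing Implicit Defensive.

Section H.
Variables (T : finType) (e : rel T).
Hypotheses (e_sym : symmetric e) (e_irr : irreflexive e).

Definition f := fun (S : {set T}) v => if is_stable e (v |: S) then v |: S else S.

Lemma stableP (A : {set T}) x y : is_stable e A -> x \in A -> y \in A -> ~~ e x y.
Proof. by move=> /forallP H xA yA; have /implyP/(_ xA)/forallP/(_ y)/implyP/(_ yA) := H x. Qed.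

Lemma stable_add (A : {set T}) v : is_stable e A -> ~~ is_stable e (v |: A) ->
  exists2 u, u \in A & e v u.
Proof.
move=> sA nst; apply/exists_inP; apply: contraNT nst => /exists_inP nex.
apply/forallP => x; apply/implyP => /setU1P xA; apply/forallP => y;
  apply/implyP => /setU1P yA.
case: xA => [->|xA]; case: yA => [->|yA].
- by rewrite e_irr.
- by apply/negP => evy; apply: nex; exists y.
- by rewrite e_sym; apply/negP => evy; apply: nex; exists x.
- exact: stableP sA xA yA.
Qed.

Lemma fold_stable s (A : {set T}) : is_stable e A -> is_stable e (foldl f A s).
Proof.
elim: s A => //= a s IH A sA; apply: IH; rewrite /f; by case: ifP.
Qed.

Lemma fold_mono s (A : {set T}) : A \subset foldl f A s.
Proof.
elim: s A => //= a s IH A; apply: subset_trans (IH _); rewrite /f.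
case: ifP => // _; exact: subsetUr.
Qed.

Lemma fold_max s (A : {set T}) v : is_stable e A -> v \in s ->
  v \in foldl f A s \/ exists2 u, u \in foldl f A s & e v u.
Proof.
elim: s A => //= a s IH A sA; rewrite inE => /orP[/eqP->|vs]; last first.
  by apply: IH => //; rewrite /f; case: ifP.
rewrite [f A a]/f; case: ifP => st.
  by left; apply: (subsetP (fold_mono s _)); rewrite setU11.
have [u uA eau] := stable_add sA (negbT st).
by right; exists u => //; exact: (subsetP (fold_mono s A)).
Qed.


Lemma greedy_eq sigma : greedy_stable e sigma = foldl f set0 sigma.
Proof. reflexivity. Qed.

Lemma stable0 : is_stable e set0.
Proof. by apply/forallP => x; rewrite inE. Qed.

Lemma fold_sub s (A : {set T}) x : x \in foldl f A s -> (x \in A) || (x \in s).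
Proof.
elim: s A => [|a s IH] A /=; first by move->.
move/IH/orP => [|xs]; last by rewrite inE xs !orbT.
rewrite /f; case: ifP => _; last by move->.
by rewrite !inE => /orP[->|->]; rewrite ?orbT.
Qed.

Lemma cliqueP (A : {set T}) x y : is_clique e A -> x \in A -> y \in A -> x != y -> e x y.
Proof. by move=> /forallP H xA yA; have /implyP/(_ xA)/forallP/(_ y)/implyP/(_ yA)/implyP := H x. Qed.

Lemma cliqueI (A : {set T}) : (forall x y, x \in A -> y \in A -> x != y -> e x y) -> is_clique e A.
Proof.
move=> H; apply/forallP => x; apply/implyP => xA; apply/forallP => y; apply/implyP => yA.
by apply/implyP; apply: H.
Qed.

Lemma incn v u : (u \in cnbh e v) = (u == v) || e v u.
Proof. by rewrite /cnbh /nbh !inE. Qed.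

Variable S : {set T}.
Hypothesis dg : degree_greedy e S.

Lemma S_stable : is_stable e S.
Proof. by case: dg => sg [_ _ ->]; rewrite greedy_eq; apply: fold_stable; apply: stable0. Qed.

Lemma S_max v : v \notin S -> exists2 u, u \in S & e v u.
Proof.
case: dg => sg [pe _ ES] vS.
have vsg : v \in sg by rewrite (perm_mem pe) mem_enum.
have := fold_max stable0 vsg; rewrite -greedy_eq -ES; case=> //.
by rewrite (negbTE vS).
Qed.

Lemma S_key v w : v \in S -> e w v -> is_clique e (cnbh e w) -> deg e w < deg e v -> False.
Proof.
case: (dg) => sg [pe pw ES] vS ewv cw ltd.
have wsg : w \in sg by rewrite (perm_mem pe) mem_enum.
case/splitPr: wsg pw ES => p q pw ES.
move: pw; rewrite pairwise_cat => /and3P[/allrelP ar _ _].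
have vnp : v \notin p.
  apply/negP => vp; have := ar v w vp (mem_head _ _); by rewrite leqNgt ltd.
rewrite greedy_eq foldl_cat /= in ES.
set Sp := foldl f set0 p in ES.
have sSp : is_stable e Sp by apply: fold_stable; apply: stable0.
have vSp : v \notin Sp by apply/negP => /fold_sub; rewrite inE (negbTE vnp).
have sS := S_stable.
move: ES; rewrite [f Sp w]/f; case: ifP => st ES.
  have wS : w \in S by rewrite ES; apply: (subsetP (fold_mono q _)); rewrite setU11.
  by have := stableP sS wS vS; rewrite ewv.
have [u uSp ewu] := stable_add sSp (negbT st).
have uS : u \in S by rewrite ES; exact: (subsetP (fold_mono q _)).
have uv : u != v by apply: contraNneq vSp => <-.
have uw : u \in cnbh e w by rewrite incn ewu orbT.
have vw : v \in cnbh e w by rewrite incn ewv orbT.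
have euv := cliqueP cw uw vw uv.
by have := stableP sS uS vS; rewrite euv.
Qed.

Lemma card_cnbh v : #|cnbh e v| = (deg e v).+1.
Proof. by rewrite /cnbh cardsU1 /nbh inE e_irr. Qed.

Lemma S_simp v : edge_simplicial e -> v \in S -> simplicial_vertex e v.
Proof.
move=> es vS.
case: (set_0Vmem (nbh e v)) => [n0|[u]].
  have nz z : e v z = false by have := in_set0 z; rewrite -n0 /nbh inE.
  apply: cliqueI => x y; rewrite !incn !nz !orbF.
  by move=> /eqP-> /eqP->; rewrite eqxx.
rewrite /nbh inE => evu.
have [K [[w [sw ->]] [vK uK]]] := es _ _ evu.
suff sub : cnbh e v \subset cnbh e w.
  by apply: cliqueI => x y xv yv; apply: (cliqueP sw); apply: (subsetP sub).
have [<-|wv] := eqVneq w v; first exact: subxx.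
have ewv : e w v by move: vK; rewrite incn eq_sym (negbTE wv).
have sub : cnbh e w \subset cnbh e v.
  apply/subsetP => z zw; rewrite incn; have [//|zv] := eqVneq z v.
  by rewrite e_sym (cliqueP sw zw vK zv).
have [lt|ge] := ltnP (deg e w) (deg e v); first by case: (S_key vS ewv sw lt).
have /eqP -> // : cnbh e w == cnbh e v.
by rewrite eqEcard sub !card_cnbh.
Qed.
End H.

Theorem lemma10 (T : finType) (e : rel T)
  (e_sym : symmetric e) (e_irr : irreflexive e)
  (S : {set T}) :
  diamond_free e -> degree_greedy e S ->
  (edge_simplicial e <-> GS_eq_GminusS e S).
Proof.
move=> df dg.
have sS := S_stable dg.
have memA x y v : (v \in [set v in S | (x \in nbh e v) && (y \in nbh e v)]) =
   [&& v \in S, e v x & e v y] by rewrite !inE.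
have nS_ne a b : a \in S -> b \notin S -> a != b by move=> aS bS; apply: contraNneq bS => <-.
split.
- move=> es x y xS yS xy; rewrite /GS_mult /GminusS_mult.
  set A := [set v in S | _].
  case exy: (e x y); last first.
    apply/eqP; rewrite cards_eq0; apply/eqP/setP => v; rewrite memA inE.
    apply/negP => /and3P[vS evx evy].
    have sv := S_simp e_sym e_irr dg es vS.
    have := cliqueP sv (_ : x \in cnbh e v) (_ : y \in cnbh e v) xy.
    by rewrite exy incn evx incn evy !orbT => /(_ erefl erefl).
  have [K [[w [sw ->]] [xK yK]]] := es _ _ exy.
  have [s [sS' esx esy]] : exists s, [/\ s \in S, e s x & e s y].
    have [wS|wS] := boolP (w \in S).
      exists w; split => //.
        by move: xK; rewrite incn eq_sym (negbTE (nS_ne _ _ wS xS)).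
      by move: yK; rewrite incn eq_sym (negbTE (nS_ne _ _ wS yS)).
    have [u uS ewu] := S_max e_sym e_irr dg wS.
    have uK : u \in cnbh e w by rewrite incn ewu orbT.
    exists u; split => //; apply: (cliqueP sw) => //; exact: nS_ne.
  apply/eqP; rewrite eqn_leq; apply/andP; split; last first.
    by rewrite card_gt0; apply/set0Pn; exists s; rewrite memA sS' esx esy.
  apply/card_le1_eqP => a b; rewrite !memA => /and3P[aS eax eay] /and3P[bS ebx eby].
  apply/eqP; apply: contraT => ab; case: df.
  exists x, y, a, b; split.
  - by rewrite eq_sym.
  - exact: exy.
  - by rewrite e_sym.
  - by rewrite e_sym.
  - split; [by rewrite e_sym | by rewrite e_sym | exact: stableP sS aS bS].
- move=> H.
  have simpS v : v \in S -> simplicial_vertex e v.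
    move=> vS; apply: cliqueI => a b; rewrite !incn.
    case/orP=> [/eqP->|eva]; case/orP=> [/eqP->|evb]; rewrite ?eqxx //.
    + by rewrite e_sym.
    + move=> ab.
      have aS : a \notin S by apply/negP => aS; have := stableP sS vS aS; rewrite eva.
      have bS : b \notin S by apply/negP => bS; have := stableP sS vS bS; rewrite evb.
      have := H a b aS bS ab; rewrite /GS_mult /GminusS_mult.
      case: (e a b) => //= /eqP; rewrite cards_eq0 => /eqP/setP/(_ v).
      by rewrite memA inE vS eva evb.
  move=> x y exy.
  have xy : x != y by apply: contraTneq exy => ->; rewrite e_irr.
  have [xS|xS] := boolP (x \in S).
    exists (cnbh e x); split; first by exists x; split => //; exact: simpS.
    by rewrite !incn eqxx exy orbT.
  have [yS|yS] := boolP (y \in S).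
    exists (cnbh e y); split; first by exists y; split => //; exact: simpS.
    by rewrite !incn eqxx e_sym exy orbT.
  have h := H x y xS yS xy.
  have : 0 < GS_mult e S x y by rewrite h /GminusS_mult exy.
  rewrite /GS_mult; case/card_gt0P => v; rewrite memA => /and3P[vS evx evy].
  exists (cnbh e v); split; first by exists v; split => //; exact: simpS.
  by rewrite !incn evx evy !orbT.
Qed.
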